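(* Let $\mathcal T$ be a mesh as in the context, $x,y\in\overline\Omega$ and $i\in\{1,\dots,d\}$ with $x_i=y_i$, $x\in\mathrm{Sk}_i$ and $y\notin\mathrm{Sk}_i$. Then there exists a T-junction $T$ with $\mathrm{odir}(T)=i$ and associated cell $Q=\mathrm{ascell}(T)$ such that, with $j=\mathrm{pdir}(T)$, $\overline T\cap\mathrm{conv}\{x,y\}\ne\emptyset$, $x_j\ne y_j$, and $Q_j\cap\mathrm{conv}\{x_j,y_j\}\ne\emptyset$.
   Context: Fix $d\ge2$, integers $N_1,\dots,N_d\ge1$, $\mathbf p\in\mathbb N^d$, $q_k=\lfloor(p_k+1)/2\rfloor$, $\Omega=\prod_{k=1}^d(0,N_k)$, $\mathrm{AR}=\prod_k[q_k,N_k-q_k]$. A mesh $\mathcal T$ is a finite family of pairwise disjoint sets $E=E_1\times\cdots\times E_d$ (entities) with union $\overline\Omega$, each $E_k$ a singleton $\{n\}$, $n\in\{0,\dots,N_k\}$, or an open interval $(a,b)$ with integers $0\le a<b\le N_k$; cells are entities all of whose components are open intervals; the dimension of an entity is its number of interval components. Only meshes arising as follows are considered: start from a tensor-product mesh given by integer grids $0=g^k_0<\dots<g^k_{M_k}=N_k$ (entities: products of grid points and open grid intervals), each containing $0,\dots,q_k$ and $N_k-q_k,\dots,N_k$, and apply finitely many subdivision steps $\mathrm{subdiv}(\mathcal T,Q,j)$: for a cell $Q\subset\mathrm{AR}$ and direction $j$ with $m=\frac12(\inf Q_j+\sup Q_j)$ an integer, let $D=\overline Q$; for each $\ell\ne j$,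 if $\min D_\ell=q_\ell$ replace $D_\ell$ by $D_\ell\cup[0,q_\ell]$, and if $\max D_\ell=N_\ell-q_\ell$ replace $D_\ell$ by $D_\ell\cup[N_\ell-q_\ell,N_\ell]$; replace each entity $E\subset D$ with $E_j=Q_j$ by the three entities with $j$-th component $(\inf Q_j,m)$, $\{m\}$, $(m,\sup Q_j)$. The $i$-orthogonal skeleton is $\mathrm{Sk}_i=\bigcup_{Q\text{ cell}}\{z\in\overline Q: z_i\in\{\inf Q_i,\sup Q_i\}\}$. A T-junction is an entity $T$ of dimension $d-2$, $T\not\subset\partial\Omega$, such that fewer than four entities $F$ of dimension $d-1$ satisfy $T\subset\partial F$. For a T-junction with singleton components $T_i=\{t_i\}$, $T_j=\{t_j\}$ there is a unique cell $Q=\mathrm{ascell}(T)$ with $T\subset\partial Q$, $t_i\in Q_i$ and $t_j\in\{\inf Q_j,\sup Q_j\}$; then $\mathrm{odir}(T)=i$ and $\mathrm{pdir}(T)=j$. $\mathrm{conv}$ denotes convex hull. *)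

(* Defs.v *)
From HB Require Import structures.
From mathcomp Require Import all_boot all_order all_algebra.
From mathcomp Require Import reals.
Set Implicit Arguments. Unset Strict Implicit. Unset Printing Implicit Defensive.
Import Order.TTheory GRing.Theory Num.Theory.
Local Open Scope ring_scope.

(* A component E_k of an entity: a singleton {n} or an open interval (a,b). *)
Inductive comp := Pt of nat | Iv of nat & nat.

Definition cinf (c : comp) : nat := match c with Pt n => n | Iv a _ => a end.
Definition csup (c : comp) : nat := match c with Pt n => n | Iv _ b => b end.
Definition is_iv (c : comp) : bool := if c is Iv _ _ then true else false.

Definition ent (d : nat) := {ffun 'I_d -> comp}.
Definition mesh (d : nat) := ent d -> Prop.

Definition edim d (E : ent d) : nat := #|[pred k | is_iv (E k)]|.
Definition is_cell d (E : ent d) : Prop := forall k, is_iv (E k).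

Section Geometry.
Context (R : realType) (d : nat) (N p : 'I_d -> nat).

Definition q (k : 'I_d) : nat := ((p k + 1) %/ 2)%N.

Definition in_comp (c : comp) (r : R) : Prop :=
  match c with Pt n => r = n%:R | Iv a b => a%:R < r < b%:R end.
Definition in_compcl (c : comp) (r : R) : Prop :=
  match c with Pt n => r = n%:R | Iv a b => a%:R <= r <= b%:R end.

Definition mem_ent (E : ent d) (z : 'I_d -> R) : Prop := forall k, in_comp (E k) (z k).
Definition mem_cl (E : ent d) (z : 'I_d -> R) : Prop := forall k, in_compcl (E k) (z k).

Definition in_bdry (T F : ent d) : Prop :=
  forall z, mem_ent T z -> mem_cl F z /\ ~ mem_ent F z.

Definition in_clOmega (z : 'I_d -> R) : Prop := forall k, 0 <= z k <= (N k)%:R.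
Definition on_dOmega (z : 'I_d -> R) : Prop :=
  in_clOmega z /\ exists k, z k = 0 \/ z k = (N k)%:R.

Definition in_AR (z : 'I_d -> R) : Prop :=
  forall k, (q k)%:R <= z k <= (N k)%:R - (q k)%:R.

Definition consec (s : seq nat) (a b : nat) : Prop :=
  exists i, (i.+1 < size s)%N /\ nth 0%N s i = a /\ nth 0%N s i.+1 = b.

Definition grid_ok (g : 'I_d -> seq nat) : Prop :=
  forall k, [/\ sorted ltn (g k), head 1%N (g k) = 0%N, last 0%N (g k) = N k,
    (forall m, (m <= q k)%N -> m \in g k) &
    (forall m, (N k - q k <= m <= N k)%N -> m \in g k)].

Definition tensor_mesh (g : 'I_d -> seq nat) : mesh d := fun E =>
  forall k, (exists n, n \in g k /\ E k = Pt n) \/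
            (exists a b, consec (g k) a b /\ E k = Iv a b).

Definition subdiv_ok (M : mesh d) (Q : ent d) (j : 'I_d) : Prop :=
  [/\ M Q, is_cell Q, (forall z, mem_ent Q z -> in_AR z) &
      ~~ odd (cinf (Q j) + csup (Q j))].

Definition Dlo (Q : ent d) (j l : 'I_d) : nat :=
  if l == j then cinf (Q j)
  else if cinf (Q l) == q l then 0%N else cinf (Q l).
Definition Dhi (Q : ent d) (j l : 'I_d) : nat :=
  if l == j then csup (Q j)
  else if (csup (Q l))%:R == (N l)%:R - (q l)%:R :> R then N l else csup (Q l).

Definition sub_D (Q : ent d) (j : 'I_d) (E : ent d) : Prop :=
  forall z, mem_ent E z -> forall l, (Dlo Q j l)%:R <= z l <= (Dhi Q j l)%:R.

Definition upd (E : ent d) (j : 'I_d) (c : comp) : ent d :=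
  [ffun k => if k == j then c else E k].

Definition subdiv (M : mesh d) (Q : ent d) (j : 'I_d) : mesh d := fun F =>
  let a := cinf (Q j) in let b := csup (Q j) in let m := ((a + b) %/ 2)%N in
  (M F /\ ~ (sub_D Q j F /\ F j = Q j)) \/
  (exists E, [/\ M E, sub_D Q j E, E j = Q j &
     F = upd E j (Iv a m) \/ F = upd E j (Pt m) \/ F = upd E j (Iv m b)]).

Inductive admissible : mesh d -> Prop :=
| adm_tp g : grid_ok g -> admissible (tensor_mesh g)
| adm_sd M Q j : admissible M -> subdiv_ok M Q j -> admissible (subdiv M Q j).

Definition in_Sk (M : mesh d) (i : 'I_d) (z : 'I_d -> R) : Prop :=
  exists Q, [/\ M Q, is_cell Q, mem_cl Q z &
                 z i = (cinf (Q i))%:R \/ z i = (csup (Q i))%:R].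

Definition supports (M : mesh d) (T F : ent d) : Prop :=
  [/\ M F, edim F = (d - 1)%N & in_bdry T F].

Definition tjunction (M : mesh d) (T : ent d) : Prop :=
  [/\ M T, edim T = (d - 2)%N,
      ~ (forall z, mem_ent T z -> on_dOmega z) &
      ~ (exists F1 F2 F3 F4, [/\ F1 <> F2, F1 <> F3 & F1 <> F4] /\
           [/\ F2 <> F3, F2 <> F4 & F3 <> F4] /\
           [/\ supports M T F1, supports M T F2, supports M T F3 &
               supports M T F4])].

(* Q = ascell(T), with odir(T) = i and pdir(T) = j *)
Definition is_ascell (M : mesh d) (T : ent d) (i j : 'I_d) (Q : ent d) : Prop :=
  i != j /\ exists ti tj, [/\ T i = Pt ti, T j = Pt tj, M Q & is_cell Q] /\
     [/\ in_bdry T Q, in_comp (Q i) ti%:R & tj = cinf (Q j) \/ tj = csup (Q j)].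

Definition seg (x y : 'I_d -> R) (t : R) : 'I_d -> R :=
  fun k => (1 - t) * x k + t * y k.

End Geometry.

(* Main.v *)
Require Import Defs.
From HB Require Import structures.
From mathcomp Require Import all_boot all_order all_algebra.
From mathcomp Require Import reals.
From mathcomp Require Import zify ring lra.
From Stdlib Require Import Classical FunctionalExtensionality.
Set Implicit Arguments. Unset Strict Implicit. Unset Printing Implicit Defensive.

Section Grid.
Variable s : seq nat.
Hypothesis Hs : sorted ltn s.

Lemma nth_mono i j : (i < j)%N -> (j < size s)%N -> (nth 0 s i < nth 0 s j)%N.
Proof.
move=> hij hj; apply: (sorted_ltn_nth ltn_trans 0 Hs) => //; rewrite inE //.
exact: ltn_trans hij hj.
Qed.

Lemma nth_mono_le i j : (i <= j)%N -> (j < size s)%N -> (nth 0 s i <= nth 0 s j)%N.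
Proof.
rewrite leq_eqVlt => /orP[/eqP -> //|h] hj; exact/ltnW/nth_mono.
Qed.

Lemma nth_inj i j : (i < size s)%N -> (j < size s)%N -> nth 0 s i = nth 0 s j -> i = j.
Proof.
move=> hi hj e; case: (ltngtP i j) => // h.
- by have := nth_mono h hj; rewrite e ltnn.
- by have := nth_mono h hi; rewrite e ltnn.
Qed.

Lemma consec_lt a b : consec s a b -> (a < b)%N.
Proof. by case=> i [h [<- <-]]; apply: nth_mono. Qed.

Lemma mem_consec_out n a b : n \in s -> consec s a b -> (n <= a)%N || (b <= n)%N.
Proof.
move=> hn [i [hi [<- <-]]]; have hk := index_mem n s; rewrite hn in hk.
rewrite -(nth_index 0 hn); case: (leqP (index n s) i) => h.
- by rewrite nth_mono_le //; apply: ltn_trans hi.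
- by rewrite orbC nth_mono_le.
Qed.

Lemma consec_uniq a b a' b' : consec s a b -> consec s a' b' ->
  (a < b')%N -> (a' < b)%N -> a = a' /\ b = b'.
Proof.
move=> [i [hi [ea eb]]] [i' [hi' [ea' eb']]] h1 h2.
case: (ltngtP i i') => h.
- have : (nth 0 s i.+1 <= nth 0 s i')%N by apply: nth_mono_le => //; apply: ltn_trans hi'.
  lia.
- have : (nth 0 s i'.+1 <= nth 0 s i)%N by apply: nth_mono_le => //; apply: ltn_trans hi.
  lia.
- by subst.
Qed.

Lemma mem_le_last n : n \in s -> (n <= last 0 s)%N.
Proof.
move=> hn; have hk := index_mem n s; rewrite hn in hk.
rewrite -(nth_index 0 hn) -nth_last.
have [m hm] : exists m, size s = m.+1 by exists (size s).-1; rewrite prednK //; exact: leq_ltn_trans (leq0n _) hk.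
rewrite hm /=; apply: nth_mono_le; rewrite ?hm //.
by rewrite hm ltnS in hk.
Qed.

Lemma consec_le_last a b : consec s a b -> (b <= last 0 s)%N.
Proof. by case=> i [hi [_ <-]]; apply: mem_le_last; apply: mem_nth. Qed.

End Grid.

Definition dyk (s : seq nat) (a b : nat) : Prop :=
  exists g g' e r h, [/\ consec s g g', g' = (g + h * 2^e)%N, a = (g + r * h)%N,
                        b = (g + r * h + h)%N & (r < 2^e)%N /\ (0 < h)%N].

Lemma dyk_consec s a b : consec s a b -> (a < b)%N -> dyk s a b.
Proof.
move=> hc hab; exists a, b, 0%N, 0%N, (b - a)%N; split => //; rewrite ?expn0; lia.
Qed.

Lemma dyk_lt s a b : dyk s a b -> (a < b)%N.
Proof. by case=> g [g' [e [r [h [_ _ -> -> [_ hh]]]]]]; lia. Qed.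

Lemma dyk_half s a b : dyk s a b -> ~~ odd (a + b) ->
  dyk s a ((a + b) %/ 2) /\ dyk s ((a + b) %/ 2) b.
Proof.
case=> g [g' [e [r [h [hc hg ha hb [hr hh]]]]]] hodd.
have hm : ((a + b) %% 2 = 0)%N by rewrite modn2; case: (odd _) hodd.
have hh2 : (h %% 2 = 0)%N by move: hm; rewrite ha hb; lia.
set h' := (h %/ 2)%N.
have eh : h = (2 * h')%N by rewrite /h'; lia.
have e2 : (2 ^ e.+1 = 2 * 2 ^ e)%N by rewrite expnS.
have em : ((a + b) %/ 2 = g + r * h + h')%N.
  rewrite ha hb eh.
  have -> : (g + r * (2 * h') + (g + r * (2 * h') + 2 * h') = 2 * (g + r * (2 * h') + h'))%N by ring.
  by rewrite mulKn // -mulnA.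
split.
- exists g, g', e.+1, (2 * r)%N, h'; split => //.
  + by rewrite hg e2 eh; ring.
  + by rewrite ha eh; ring.
  + by rewrite em eh; ring.
  + split; last by rewrite /h'; lia.
    by rewrite e2; lia.
- exists g, g', e.+1, (2 * r).+1, h'; split => //.
  + by rewrite hg e2 eh; ring.
  + by rewrite em eh; ring.
  + by rewrite hb eh; ring.
  + split; last by rewrite /h'; lia.
    by rewrite e2; lia.
Qed.

Lemma dyk_in s a b : dyk s a b -> exists g g', [/\ consec s g g', (g <= a)%N & (b <= g')%N].
Proof.
case=> g [g' [e [r [h [hc hg ha hb [hr hh]]]]]]; exists g, g'; split => //; first lia.
have : (r * h + h <= h * 2 ^ e)%N by nia.
lia.
Qed.

Lemma dyk_nest s a b a' b' : sorted ltn s -> dyk s a b -> dyk s a' b' ->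
  (a <= a')%N -> (b' <= b)%N -> (a != a') || (b != b') ->
  (b' <= (a + b) %/ 2)%N \/ ((a + b) %/ 2 <= a')%N.
Proof.
move=> Hs d1 d2 h1 h2 hne.
have [g1 [g1' [c1 l1 u1]]] := dyk_in d1.
have [g2 [g2' [c2 l2 u2]]] := dyk_in d2.
have lt1 := dyk_lt d1; have lt2 := dyk_lt d2.
have [eg eg'] : g1 = g2 /\ g1' = g2'.
  apply: (consec_uniq Hs c1 c2); lia.
case: d1 => g [g' [e [r [h [hc hg ha hb [hr hh]]]]]].
case: d2 => k [k' [f [r' [h' [hc' hk ha' hb' [hr' hh']]]]]].
have bb1 : (r * h + h <= h * 2 ^ e)%N by nia.
have bb2 : (r' * h' + h' <= h' * 2 ^ f)%N by nia.
have [eg1 eg1'] : g = k /\ g' = k'.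
  apply: (consec_uniq Hs hc hc'); lia.
subst k k'.
have hlt : (h' < h)%N.
  move: hne; rewrite ha hb ha' hb'; case: (ltngtP h' h) => // e1; try lia.
have ee : (h * 2 ^ e = h' * 2 ^ f)%N by lia.
have hef : (e < f)%N.
  case: (ltnP e f) => // hfe.
  have : (2 ^ f <= 2 ^ e)%N by rewrite leq_exp2l.
  nia.
set f' := (f - e.+1)%N.
have ef : (2 ^ f = 2 ^ e * 2 * 2 ^ f')%N.
  by rewrite -[(2 ^ e * 2)%N]expnSr -expnD /f'; congr (_ ^ _)%N; lia.
have eh : h = (2 * (h' * 2 ^ f'))%N.
  apply/eqP; rewrite -(eqn_pmul2r (expn_gt0 2 e)) ee ef; apply/eqP; ring.
set H := (h' * 2 ^ f')%N.
have em : ((a + b) %/ 2 = g + (2 * r + 1) * H)%N.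
  rewrite ha hb eh.
  have -> : (g + r * (2 * H) + (g + r * (2 * H) + 2 * H) = 2 * (g + (2 * r + 1) * H))%N by ring.
  by rewrite mulKn.
rewrite em ha' hb'.
case: (ltnP r' ((2 * r + 1) * 2 ^ f')) => hc3.
- left.
  have : (r' * h' + h' <= (2 * r + 1) * 2 ^ f' * h')%N by nia.
  have -> : ((2 * r + 1) * 2 ^ f' * h' = (2 * r + 1) * H)%N by rewrite /H; ring.
  lia.
- right.
  have : ((2 * r + 1) * 2 ^ f' * h' <= r' * h')%N by rewrite leq_mul2r hc3 orbT.
  have -> : ((2 * r + 1) * 2 ^ f' * h' = (2 * r + 1) * H)%N by rewrite /H; ring.
  lia.
Qed.

Import Order.TTheory GRing.Theory Num.Theory.
Local Open Scope ring_scope.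

Definition validc (n : nat) (c : Defs.comp) : bool :=
  match c with Pt m => (m <= n)%N | Iv a b => (a < b <= n)%N end.
Definition subclb (c c' : Defs.comp) : bool :=
  match c, c' with
  | Pt n, Pt m => n == m
  | Pt n, Iv a b => (a <= n <= b)%N
  | Iv _ _, Pt _ => false
  | Iv a b, Iv a' b' => (a' <= a)%N && (b <= b')%N end.
Definition meetsb (c c' : Defs.comp) : bool :=
  match c, c' with
  | Pt n, Pt m => n == m
  | Pt n, Iv a b => (a <= n <= b)%N
  | Iv a b, Pt m => (a < m < b)%N
  | Iv a b, Iv a' b' => (a < b')%N && (a' < b)%N end.
Definition meetsO (c c' : Defs.comp) : bool :=
  match c, c' with
  | Pt n, Pt m => n == m
  | Pt n, Iv a b => (a < n < b)%N
  | Iv a b, Pt m => (a < m < b)%N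
  | Iv a b, Iv a' b' => (a < b')%N && (a' < b)%N end.

Section Real1.
Variable R : realType.

Lemma natlt (a b : nat) : (a%:R < b%:R :> R) -> (a < b)%N.
Proof. by rewrite ltr_nat. Qed.
Lemma natle (a b : nat) : (a%:R <= b%:R :> R) -> (a <= b)%N.
Proof. by rewrite ler_nat. Qed.
Lemma nateq (a b : nat) : (a%:R = b%:R :> R) -> a = b.
Proof. by move/eqP; rewrite eqr_nat => /eqP. Qed.
Lemma natlt' (a b : nat) : (a < b)%N -> (a%:R < b%:R :> R).
Proof. by rewrite ltr_nat. Qed.
Lemma natle' (a b : nat) : (a <= b)%N -> (a%:R <= b%:R :> R).
Proof. by rewrite ler_nat. Qed.
Lemma natge0 (a : nat) : (0 <= a%:R :> R).
Proof. by rewrite ler0n. Qed.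
Lemma natS (a : nat) : (a.+1%:R = a%:R + 1 :> R).
Proof. by rewrite -addn1 natrD. Qed.

Lemma comp_cl (c : Defs.comp) (r : R) : in_comp c r -> in_compcl c r.
Proof. case: c => [n|a b] //= /andP[h1 h2]; apply/andP; split; exact: ltW. Qed.

Lemma meetsO_real c c' (r : R) : in_comp c r -> in_comp c' r -> meetsO c c'.
Proof.
case: c => [n|a b]; case: c' => [n'|a' b'] /=.
- by move=> -> /nateq ->.
- move=> -> /andP[h1 h2]; apply/andP; split; exact: natlt.
- move=> /andP[h1 h2] h; subst; apply/andP; split; exact: natlt.
- move=> /andP[h1 h2] /andP[h3 h4]; apply/andP; split; apply: natlt; lra.
Qed.

Lemma meetsb_real c c' (r : R) : in_comp c r -> in_compcl c' r -> meetsb c c'.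
Proof.
case: c => [n|a b]; case: c' => [n'|a' b'] /=.
- by move=> -> /nateq ->.
- move=> -> /andP[h1 h2]; apply/andP; split; exact: natle.
- move=> /andP[h1 h2] h; subst; apply/andP; split; exact: natlt.
- move=> /andP[h1 h2] /andP[h3 h4]; apply/andP; split; apply: natlt; lra.
Qed.

Lemma subclb_real c c' (r : R) : subclb c c' -> in_comp c r -> in_compcl c' r.
Proof.
case: c => [n|a b]; case: c' => [n'|a' b'] //=.
- by move=> /eqP -> ->.
- by move=> /andP[h1 h2] ->; apply/andP; split; apply: natle'.
- move=> /andP[h1 h2] /andP[h3 h4]; apply/andP; split.
  + have := natle' h1; lra.
  + have := natle' h2; lra.
Qed.

Definition notint (r : R) := forall n : nat, r <> n%:R.

Lemma notint_iv c (r : R) : notint r -> in_comp c r -> is_iv c.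
Proof. by case: c => [n|a b] //= h e; case: (h n). Qed.

Lemma notint_cl_comp c (r : R) : notint r -> in_compcl c r -> in_comp c r.
Proof.
case: c => [n|a b] /= h; first by move=> e; case: (h n).
move=> /andP[h1 h2]; apply/andP; split; rewrite lt_neqAle ?h1 ?h2 andbT.
- by apply/eqP => e; case: (h a).
- by apply/eqP => e; case: (h b).
Qed.

Lemma half_pos : (0 : R) < 2^-1. Proof. by rewrite invr_gt0 ltr0n. Qed.
Lemma half_lt1 : (2^-1 : R) < 1.
Proof. by rewrite invf_lt1 // ltr1n. Qed.

Lemma notint_halfp (n : nat) : notint (n%:R + 2^-1).
Proof.
move=> m e; have h1 := half_pos; have h2 := half_lt1.
have a1 : (n%:R < m%:R :> R) by lra.
have a2 : (m%:R < n.+1%:R :> R) by rewrite natS; lra.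
have := natlt a1; have := natlt a2; lia.
Qed.

Lemma notint_halfm (n : nat) : (0 < n)%N -> notint (n%:R - 2^-1).
Proof.
move=> hn m e; have h1 := half_pos; have h2 := half_lt1.
case: n hn e => // n _ e.
have a1 : (n%:R < m%:R :> R) by move: e; rewrite natS; lra.
have a2 : (m%:R < n.+1%:R :> R) by lra.
have := natlt a1; have := natlt a2; lia.
Qed.

Lemma near_int_cl (n lo hi : nat) (r : R) :
  (n%:R - 2^-1 <= r <= n%:R + 2^-1) -> lo%:R < r -> r < hi%:R -> (lo <= n <= hi)%N.
Proof.
move=> /andP[h1 h2] h3 h4; have := half_pos; have := half_lt1 => hh1 hh2.
apply/andP; split.
- have : (lo%:R < n.+1%:R :> R) by rewrite natS; lra.
  move/natlt; lia.
- case: n h1 h2 => [|n] h1 h2; first by [].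
  have : (n%:R < hi%:R :> R) by move: h1; rewrite natS; lra.
  move/natlt; lia.
Qed.

End Real1.
Arguments natlt {R a b}.
Arguments natle {R a b}.
Arguments nateq {R a b}.
Arguments natlt' {R a b}.
Arguments natle' {R a b}.
Arguments notint_halfp {R}.
Arguments notint_halfm {R n}.
Arguments near_int_cl {R n lo hi r}.


Section Cover.
Variable R : realType.

Lemma grid_cover (s : seq nat) (r : R) : sorted ltn s -> s <> [::] ->
  (head 0%N s)%:R <= r -> r <= (last 0%N s)%:R ->
  (exists n, n \in s /\ r = n%:R) \/ (exists a b, consec s a b /\ a%:R < r < b%:R).
Proof.
elim: s => [|x s IH] // Hs _ /= hx hl.
case: s IH Hs hl => [|y s] IH Hs hl.
  by left; exists x; split; [rewrite inE | apply/le_anti; rewrite hx hl].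
have [hxy Hs'] : (x < y)%N /\ sorted ltn (y :: s) by move: Hs => /= /andP[].
case: (ltP r y%:R) => hry.
- case: (eqVneq r x%:R) => hrx.
  + by left; exists x; rewrite inE eqxx.
  + right; exists x, y; split; first by exists 0%N.
    by rewrite hry andbT lt_neqAle eq_sym hrx hx.
- have [[n [hn e]]|[a [b [[i [hi [ea eb]]] hab]]]] := IH Hs' (fun e : y :: s = [::] => ltac:(discriminate e)) hry hl.
  + by left; exists n; rewrite inE hn orbT.
  + by right; exists a, b; split => //; exists i.+1.
Qed.
End Cover.

Section Inv.
Variables (R : realType) (d : nat) (N p : 'I_d -> nat).

Definition Inv (g : 'I_d -> seq nat) (M : mesh d) : Prop :=
  [/\ grid_ok N p g,
      (forall E k, M E -> validc (N k) (E k)),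
      (forall E E', M E -> M E' -> (forall k, meetsO (E k) (E' k)) -> E = E'),
      (forall z : 'I_d -> R, in_clOmega N z -> exists E, M E /\ mem_ent E z) &
      ((forall Q S, M Q -> is_cell Q -> M S -> (forall k, meetsb (S k) (Q k)) ->
          forall k, subclb (S k) (Q k)) /\
       (forall E k a b, M E -> E k = Iv a b -> dyk (g k) a b))].

Lemma Inv_tensor g : grid_ok N p g -> Inv g (tensor_mesh g).
Proof.
move=> Hg; split => //.
- move=> E k /(_ k) [[n [hn ->]]|[a [b [hc ->]]]] /=; have [Hs Hh Hl _ _] := Hg k.
  + by rewrite -Hl mem_le_last.
  + by rewrite (consec_lt Hs hc) -Hl (consec_le_last Hs hc).
- move=> E E' HE HE' hm; apply/ffunP => k; have [Hs Hh Hl _ _] := Hg k.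
  move: (hm k).
  case: (HE k) => [[n [hn ->]]|[a [b [hc ->]]]];
  case: (HE' k) => [[n' [hn' ->]]|[a' [b' [hc' ->]]]] //=.
  + by move/eqP ->.
  + move=> h; have := mem_consec_out Hs hn hc'; lia.
  + move=> h; have := mem_consec_out Hs hn' hc; lia.
  + by move=> /andP[h1 h2]; have [-> ->] := consec_uniq Hs hc hc' h1 h2.
- move=> z hz.
  have : forall k, exists c, ((exists n, n \in g k /\ c = Pt n) \/
            (exists a b, consec (g k) a b /\ c = Iv a b)) /\ in_comp c (z k).
    move=> k; have [Hs Hh Hl _ _] := Hg k.
    have hne : g k <> [::] by move=> e; rewrite e in Hh.
    have h0 : head 0%N (g k) = 0%N by case: (g k) Hh hne.
    have [h1 h2] : 0 <= z k /\ z k <= (N k)%:R by case/andP: (hz k).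
    have := @grid_cover R (g k) (z k) Hs hne; rewrite h0 Hl => /(_ h1 h2).
    move=> [[n [hn e]]|[a [b [hc hab]]]].
    + by exists (Pt n); split; [left; exists n|].
    + by exists (Iv a b); split; [right; exists a, b|].
  move=> /fin_all_exists [u hu]; exists [ffun k => u k]; split.
  + by move=> k; rewrite ffunE; case: (hu k).
  + by move=> k; rewrite ffunE; case: (hu k).
- split.
  + move=> Q S HQ cQ HS hm k; move: (hm k) (cQ k).
    have [Hs Hh Hl _ _] := Hg k.
    case: (HQ k) => [[n [hn ->]]|[a [b [hc ->]]]] //=.
    case: (HS k) => [[n' [hn' ->]]|[a' [b' [hc' ->]]]] //=.
    by move=> /andP[h1 h2] _; have [-> ->] := consec_uniq Hs hc' hc h1 h2; rewrite !leqnn.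
  + move=> E k a b HE hEk; have [Hs Hh Hl _ _] := Hg k.
    case: (HE k) => [[n [hn e]]|[a' [b' [hc e]]]]; rewrite hEk in e => //.
    case: e => -> ->; apply: dyk_consec => //; exact: consec_lt hc.
Qed.
End Inv.


Definition piece (a m b : nat) (c : Defs.comp) := c = Iv a m \/ c = Pt m \/ c = Iv m b.

Section PieceLemmas.
Variables (a m b : nat).
Hypothesis (ham : (a < m)%N) (hmb : (m < b)%N).

Lemma meetsO_sym x y : meetsO x y = meetsO y x.
Proof. by case: x => [?|? ?]; case: y => [?|? ?] //=; rewrite 1?eq_sym 1?andbC. Qed.

Lemma pO x c : piece a m b c -> meetsO x c -> meetsO x (Iv a b).
Proof. by case: x => [n|a' b'] [->|[->|->]] /=; lia. Qed.

Lemma pL1 x c : piece a m b c -> meetsb x c -> meetsb x (Iv a b).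
Proof. by case: x => [n|a' b'] [->|[->|->]] /=; lia. Qed.

Lemma pL2 x c : piece a m b c -> meetsb c x -> meetsb (Iv a b) x.
Proof. by case: x => [n|a' b'] [->|[->|->]] /=; lia. Qed.

Lemma pL3 x c : piece a m b c -> subclb (Iv a b) x -> subclb c x.
Proof. by case: x => [n|a' b'] [->|[->|->]] /=; lia. Qed.

Lemma pL4 c c2 : (c = Iv a m \/ c = Iv m b) -> piece a m b c2 -> meetsb c2 c -> subclb c2 c.
Proof. by move=> [->|->] [->|[->|->]] /=; lia. Qed.

Lemma pOO c c2 : piece a m b c -> piece a m b c2 -> meetsO c c2 -> c = c2.
Proof. by move=> [->|[->|->]] [->|[->|->]] //=; lia. Qed.

Lemma pL5 s x c : sorted ltn s -> (c = Iv a m \/ c = Iv m b) -> ((a + b) %/ 2)%N = m ->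
  subclb x (Iv a b) -> x <> Iv a b -> meetsb x c ->
  (forall a' b', x = Iv a' b' -> dyk s a' b') -> dyk s a b -> subclb x c.
Proof.
move=> Hs hc hm; case: x => [n|a' b'] /=.
- by move=> _ _; case: hc => -> /=.
- move=> /andP[h1 h2] hne hmt hd hd0.
  have hne' : (a != a') || (b != b').
    by rewrite -negb_and; apply/negP => /andP[/eqP e1 /eqP e2]; apply: hne; rewrite e1 e2.
  have := dyk_nest Hs hd0 (hd a' b' erefl) h1 h2 hne'; rewrite hm.
  by case: hc hmt => -> /=; lia.
Qed.
End PieceLemmas.

Section Sub.
Variables (R : realType) (d : nat) (N p : 'I_d -> nat).

Definition cmid (c : Defs.comp) : R :=
  match c with Pt n => n%:R | Iv a b => a%:R + 2^-1 end.
Definition cmid' (c : Defs.comp) : R :=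
  match c with Pt n => n%:R | Iv a b => b%:R - 2^-1 end.

Lemma cmid_in n c : validc n c -> in_comp c (cmid c).
Proof.
case: c => [k|a b] //= /andP[hab _]; have h1 := half_pos R; have h2 := half_lt1 R.
have : a.+1%:R <= b%:R :> R by rewrite ler_nat.
rewrite natS => h; apply/andP; split; lra.
Qed.
Lemma cmid'_in n c : validc n c -> in_comp c (cmid' c).
Proof.
case: c => [k|a b] //= /andP[hab _]; have h1 := half_pos R; have h2 := half_lt1 R.
have : a.+1%:R <= b%:R :> R by rewrite ler_nat.
rewrite natS => h; apply/andP; split; lra.
Qed.

Definition updp (z : 'I_d -> R) (l : 'I_d) (r : R) : 'I_d -> R :=
  fun k => if k == l then r else z k.

Lemma in_comp_bounds c (r : R) : in_comp c r -> (cinf c)%:R <= r <= (csup c)%:R.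
Proof. case: c => [n|a b] /=; first by move=> ->; rewrite lexx. by move=> /andP[h1 h2]; rewrite !ltW. Qed.

Definition sub_Dn (Q : ent d) (j : 'I_d) (E : ent d) :=
  forall l, (Dlo p Q j l <= cinf (E l))%N /\ (csup (E l) <= Dhi R N p Q j l)%N.

Lemma sub_Dn_D (Q : ent d) (j : 'I_d) (E : ent d) : sub_Dn Q j E -> sub_D R N p Q j E.
Proof.
move=> h z hz l; have [h1 h2] := h l; have /andP[h3 h4] := in_comp_bounds (hz l).
apply/andP; split.
- by apply: le_trans h3; rewrite ler_nat.
- by apply: le_trans h4 _; rewrite ler_nat.
Qed.

Lemma sub_D_Dn (Q : ent d) (j : 'I_d) (E : ent d) : (forall l, validc (N l) (E l)) -> sub_D R N p Q j E -> sub_Dn Q j E.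
Proof.
move=> hv h l; have h1 := half_pos R; have h2 := half_lt1 R.
pose z := fun k => cmid (E k); pose z' := fun k => cmid' (E k).
have hz : mem_ent E z by move=> k; exact: cmid_in (hv k).
have hz' : mem_ent E z' by move=> k; exact: cmid'_in (hv k).
have /andP[u1 _] := h z hz l; have /andP[_ u2] := h z' hz' l.
move: u1 u2 (hv l); rewrite /z /z'; case: (E l) => [n|a b] /=.
- by rewrite !ler_nat.
- move=> u1 u2 hvl; split.
  + have : (Dlo p Q j l)%:R < a.+1%:R :> R by rewrite natS; lra.
    rewrite ltr_nat; lia.
  + case: b u2 hvl => [|b] u2 hvl.
    * by move: hvl; rewrite ltn0.
    * have : b%:R < (Dhi R N p Q j l)%:R :> R by move: u2; rewrite natS; lra.
      rewrite ltr_nat; lia.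
Qed.

Lemma subclb_bounds x y : subclb x y -> (cinf y <= cinf x)%N /\ (csup x <= csup y)%N.
Proof. by case: x => [n|a b]; case: y => [n'|a' b'] //= h; lia. Qed.

End Sub.


Section Subdiv.
Variables (R : realType) (d : nat) (N p : 'I_d -> nat).

Lemma Inv_subdiv g (M : mesh d) (Q : ent d) (j : 'I_d) :
  Inv R N p g M -> subdiv_ok R N p M Q j -> Inv R N p g (subdiv R N p M Q j).
Proof.
move=> [Hg HB HP1 HP2 [HC HDy]] [HQ cQ _ hev].
have [a [b eQ]] : exists a b, Q j = Iv a b.
  by move: (cQ j); case: (Q j) => // a b _; exists a, b.
have hvQ := HB Q j HQ; rewrite eQ /= in hvQ.
rewrite eQ /= in hev.
set m := ((a + b) %/ 2)%N.
have hodd : odd (a + b) = false by apply/negbTE.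
have ham : (a < m)%N by rewrite /m; lia.
have hmb : (m < b)%N by rewrite /m; lia.
have Hsub : forall F, subdiv R N p M Q j F <->
   (M F /\ ~ (sub_D R N p Q j F /\ F j = Iv a b)) \/
   (exists E c, [/\ M E, sub_D R N p Q j E, E j = Iv a b, piece a m b c & F = upd E j c]).
  move=> F; rewrite /subdiv eQ /= -/m; split.
  - case=> [h|[E [h1 h2 h3 h4]]]; [by left | right; exists E].
    by case: h4 => [->|[->|->]]; [exists (Iv a m) | exists (Pt m) | exists (Iv m b)];
      split => //; rewrite /piece; tauto.
  - case=> [h|[E [c [h1 h2 h3 h4 ->]]]]; [by left | right; exists E; split => //].
    by case: h4 => [->|[->|->]]; tauto.
have updE : forall (E : ent d) c k, upd E j c k = if k == j then c else E k.
  by move=> E c k; rewrite ffunE.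
split => //.
-
  move=> F k /Hsub [[HF _]|[E [c [HE _ _ hc ->]]]]; first exact: HB.
  rewrite updE; case: eqP => [->|_]; last exact: HB.
  case: hc => [->|[->|->]] /=; lia.
-
  move=> F1 F2 /Hsub H1 /Hsub H2.
  case: H1 => [[HF1 n1]|[E1 [c1 [HE1 hD1 hj1 hc1 ->]]]];
  case: H2 => [[HF2 n2]|[E2 [c2 [HE2 hD2 hj2 hc2 ->]]]] => hm.
  + exact: HP1.
  + have e : F1 = E2.
      apply: HP1 => // k; have := hm k; rewrite updE; case: eqP => [->|_] //.
      by rewrite hj2; apply: (pO ham hmb hc2).
    by case: n1; rewrite e.
  + have e : F2 = E1.
      apply: HP1 => // k; have := hm k; rewrite updE meetsO_sym; case: eqP => [->|_] //.
      by rewrite hj1; apply: (pO ham hmb hc1).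
    by case: n2; rewrite e.
  + have e : E1 = E2.
      apply: HP1 => // k; have := hm k; rewrite !updE; case: eqP => [->|_] //.
      by rewrite hj1 hj2 /=; lia.
    subst E2; have := hm j; rewrite !updE eqxx => hm'.
    by rewrite (pOO ham hmb hc1 hc2 hm').
-
  move=> z hz; have [E [HE hzE]] := HP2 z hz.
  case: (classic (sub_D R N p Q j E /\ E j = Iv a b)) => [[hD hj]|hn].
  + have hzj := hzE j; rewrite hj /= in hzj.
    have [c [hc hzc]] : exists c, piece a m b c /\ in_comp c (z j).
      case/andP: hzj => h1 h2; case: (ltgtP (z j) m%:R) => h3.
      * by exists (Iv a m); split; [left|rewrite /= h1 h3].
      * by exists (Iv m b); split; [right; right|rewrite /= h2 h3].
      * by exists (Pt m); split; [right; left|].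
    exists (upd E j c); split; first by apply/Hsub; right; exists E, c.
    by move=> k; rewrite updE; case: eqP => [->|_] //; apply: hzE.
  + by exists E; split => //; apply/Hsub; left.
- split.
  + move=> Q' S' /Hsub HQ' cQ' /Hsub HS'.
    case: HQ' => [[HQ'1 nQ']|[E [c [HE hDE hjE hc eQ']]]].
    * case: HS' => [[HS'1 nS']|[E2 [c2 [HE2 hD2 hj2 hc2 ->]]]] => hm k; first exact: HC.
      have hm2 : forall k, meetsb (E2 k) (Q' k).
        move=> k'; have := hm k'; rewrite updE; case: eqP => [->|_] //.
        by rewrite hj2; apply: (pL2 ham hmb hc2).
      have hs := HC Q' E2 HQ'1 cQ' HE2 hm2.
      rewrite updE; case: eqP => [->|_]; last exact: hs.
      by apply: (pL3 ham hmb hc2); rewrite -hj2; apply: hs.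
    * subst Q'.
      have cE : is_cell E.
        move=> k'; case: (eqVneq k' j) => [->|hne]; first by rewrite hjE.
        by have := cQ' k'; rewrite updE (negbTE hne).
      have hcc : c = Iv a m \/ c = Iv m b.
        have := cQ' j; rewrite updE eqxx.
        by case: hc => [->|[->|->]] //; tauto.
      case: HS' => [[HS'1 nS']|[E2 [c2 [HE2 hD2 hj2 hc2 ->]]]] => hm k.
      - have hm2 : forall k, meetsb (S' k) (E k).
          move=> k'; have := hm k'; rewrite updE; case: eqP => [->|_] //.
          by rewrite hjE; apply: (pL1 ham hmb hc).
        have hs := HC E S' HE cE HS'1 hm2.
        rewrite updE; case: eqP => [->|_]; last exact: hs.
        have hDn := sub_D_Dn (fun l => HB E l HE) hDE.
        have hDS : sub_D R N p Q j S'.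
          apply: sub_Dn_D => l; have [u1 u2] := hDn l; have [v1 v2] := subclb_bounds (hs l).
          split; lia.
        have [Hs _ _ _ _] := Hg j.
        apply: (pL5 ham hmb Hs hcc erefl).
        + by rewrite -hjE; apply: hs.
        + by move=> e; apply: nS'.
        + by have := hm j; rewrite updE eqxx.
        + by move=> a' b' e; apply: HDy e.
        + exact: HDy hjE.
      - have hm2 : forall k, meetsb (E2 k) (E k).
          move=> k'; have := hm k'; rewrite !updE; case: eqP => [->|_] //.
          by rewrite hjE hj2 /=; lia.
        have hs := HC E E2 HE cE HE2 hm2.
        rewrite !updE; case: eqP => [_|_]; last exact: hs.
        by apply: (pL4 ham hmb hcc hc2); have := hm j; rewrite !updE eqxx.
  + move=> F k a' b' /Hsub [[HF _]|[E [c [HE _ hjE hc ->]]]]; first exact: HDy.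
    rewrite updE; case: eqP => [->|_]; last exact: HDy.
    have [d1 d2] := dyk_half (HDy Q j a b HQ eQ) hev.
    by case: hc => [->|[->|->]] // [<- <-].
Qed.

Lemma Inv_adm (M : mesh d) : admissible R N p M -> exists g, Inv R N p g M.
Proof.
elim=> [g Hg|M' Q j _ [g Hi] Hok]; first by exists g; apply: Inv_tensor.
by exists g; apply: Inv_subdiv.
Qed.
End Subdiv.

From mathcomp Require Import classical_sets.

Section Helpers.
Variable R : realType.

Lemma lin_sup (S : set R) (t0 a b lo : R) : S t0 -> (forall t, S t -> t <= 1) ->
  (forall t, S t -> lo <= (1 - t) * a + t * b) -> lo <= (1 - sup S) * a + sup S * b.
Proof.
move=> h0 h1 h2.
have hs : has_sup S by split; [exists t0 | exists 1 => t /h1].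
have ht0 : t0 <= sup S by apply: sup_upper_bound.
have := h2 t0 h0 => hl.
case: (leP 0 (b - a)) => hba.
- have : 0 <= (sup S - t0) * (b - a) by apply: mulr_ge0 => //; lra.
  lra.
- have hp : 0 < a - b by lra.
  have : sup S <= (a - lo) / (a - b).
    apply: ge_sup; first by exists t0.
    move=> t /h2 ht; rewrite ler_pdivlMr //; lra.
  rewrite ler_pdivlMr // => h; lra.
Qed.

Lemma lin_sup' (S : set R) (t0 a b hi : R) : S t0 -> (forall t, S t -> t <= 1) ->
  (forall t, S t -> (1 - t) * a + t * b <= hi) -> (1 - sup S) * a + sup S * b <= hi.
Proof.
move=> h0 h1 h2; have := @lin_sup S t0 (- a) (- b) (- hi) h0 h1.
have e : forall t, (1 - t) * - a + t * - b = - ((1 - t) * a + t * b) by move=> t; ring.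
rewrite e lerN2; apply => t /h2 ht; by rewrite e lerN2.
Qed.

Lemma sup_le1 (S : set R) t0 : S t0 -> (forall t, S t -> t <= 1) -> t0 <= sup S /\ sup S <= 1.
Proof.
move=> h0 h1; have hs : has_sup S by split; [exists t0 | exists 1 => t /h1].
split; first by apply: sup_upper_bound.
by apply: ge_sup; [exists t0|].
Qed.

Lemma seq_max (T : eqType) (s : seq T) (P : T -> Prop) (f : T -> R) :
  (exists x, x \in s /\ P x) -> exists x, [/\ x \in s, P x & forall y, y \in s -> P y -> f y <= f x].
Proof.
elim: s => [[x []]//|a s IH] [x [hx Px]].
case: (classic (exists x, x \in s /\ P x)) => [/IH [m [hm Pm Hm]]|hn].
- case: (classic (P a)) => Pa.
  + case: (leP (f a) (f m)) => hle.
    * exists m; split => //; first by rewrite inE hm orbT.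
      by move=> y; rewrite inE => /orP[/eqP ->|/Hm] //.
    * exists a; split => //; first by rewrite inE eqxx.
      move=> y; rewrite inE => /orP[/eqP ->|hy Py] //; apply: le_trans (Hm _ hy Py) _; exact: ltW.
  + exists m; split => //; first by rewrite inE hm orbT.
    by move=> y; rewrite inE => /orP[/eqP ->|/Hm] //.
- have Pa : P a.
    move: hx; rewrite inE => /orP[/eqP <- //|hx]; by case: hn; exists x.
  exists a; split => //; first by rewrite inE eqxx.
  move=> y; rewrite inE => /orP[/eqP -> //|hy Py]; by case: hn; exists y.
Qed.

Lemma pos_min_seq (s : seq R) : all (fun x => 0 < x) s ->
  0 < foldr Num.min 1 s /\ forall x, x \in s -> foldr Num.min 1 s <= x.
Proof.
elim: s => [|a s IH] /=; first by split => //; rewrite ltr01.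
move=> /andP[ha /IH [h1 h2]]; split; first by rewrite lt_min ha h1.
move=> x; rewrite inE => /orP[/eqP ->|hx]; first by rewrite ge_min lexx.
by rewrite ge_min (h2 x hx) orbT.
Qed.

Lemma pos_min (n : nat) (f : 'I_n -> R) : (forall k, 0 < f k) ->
  exists e, 0 < e /\ forall k, e <= f k.
Proof.
move=> hf; have := @pos_min_seq [seq f k | k <- enum 'I_n].
case; first by apply/allP => x /mapP [k _ ->].
move=> h1 h2; exists (foldr Num.min 1 [seq f k | k <- enum 'I_n]); split => // k.
by apply: h2; apply/mapP; exists k; rewrite ?mem_enum.
Qed.

Lemma choose_r (lo hi : nat) (be v : R) : (lo < hi)%N -> lo%:R <= be <= hi%:R ->
  exists r : R, [/\ lo%:R < r < hi%:R, notint r &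
    forall lo' hi' : nat, lo'%:R < r -> r < hi'%:R ->
      [/\ lo'%:R <= be <= hi'%:R, (0 < v -> be < hi%:R -> be < hi'%:R) &
          (v < 0 -> lo%:R < be -> lo'%:R < be)]].
Proof.
move=> hlh /andP[b1 b2]; have hh1 := half_pos R; have hh2 := half_lt1 R.
case: (classic (exists n : nat, be = n%:R)) => [[n en]|hn]; last first.
- have hni : notint be by move=> n e; apply: hn; exists n.
  exists be; split => //.
  + apply/andP; split; rewrite lt_neqAle ?b1 ?b2 andbT; apply/eqP => e.
    * by apply: (hni lo).
    * by apply: (hni hi).
  + move=> lo' hi' h1 h2; split; [by rewrite !ltW| by []| by []].
- subst be; have hn1 := natle b1; have hn2 := natle b2.
  case: (boolP ((n < hi)%N && ((0 < v) || (n == lo)))) => hc.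
  + case/andP: hc => hc1 hc2.
    exists (n%:R + 2^-1); split.
    * apply/andP; split; first by have := natle' (R:=R) hn1; lra.
      have : (n.+1%:R <= hi%:R :> R) by rewrite ler_nat.
      rewrite natS; lra.
    * exact: notint_halfp.
    * move=> lo' hi' h1 h2.
      have e1 : (lo' <= n)%N.
        have : (lo'%:R < n.+1%:R :> R) by rewrite natS; lra.
        by rewrite ltr_nat ltnS.
      have e2 : (n < hi')%N.
        have : (n%:R < hi'%:R :> R) by lra.
        by rewrite ltr_nat.
      split.
      -- by rewrite ler_nat e1 ler_nat ltnW.
      -- by move=> _ _; rewrite ltr_nat.
      -- move=> hv; case/orP: hc2 => [hv'|/eqP ->]; first lra.
         by rewrite ltxx.
  + have hlo : (lo < n)%N.
      rewrite ltn_neqAle hn1 andbT; apply/negP => /eqP e.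
      by move: hc; rewrite -e eqxx orbT andbT hlh.
    case: n b1 b2 hn1 hn2 hc hlo => // n b1 b2 hn1 hn2 hc hlo.
    exists (n.+1%:R - 2^-1); split.
    * apply/andP; split.
      -- have : (lo%:R <= n%:R :> R) by rewrite ler_nat -ltnS.
         rewrite natS; lra.
      -- have := natle' (R:=R) hn2; lra.
    * exact: notint_halfm.
    * move=> lo' hi' h1 h2.
      have e1 : (lo' <= n)%N.
        have : (lo'%:R < n.+1%:R :> R) by lra.
        by rewrite ltr_nat ltnS.
      have e2 : (n < hi')%N.
        have : (n%:R < hi'%:R :> R) by move: h2; rewrite natS; lra.
        by rewrite ltr_nat.
      split.
      -- by rewrite ler_nat ltnW // ler_nat.
      -- move=> hv hlt; exfalso; move: hc; rewrite hv /=.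
         by rewrite ltr_nat in hlt; rewrite hlt.
      -- by move=> _ _; rewrite ltr_nat ltnS.
Qed.

End Helpers.


Section Enc.
Variables (d B : nat).
Definition encT := {ffun 'I_d -> ('I_B.+1 * 'I_B.+1 * bool)}.
Definition dec (x : encT) : ent d :=
  [ffun k => let: (u, w, f) := x k in if f then Iv u w else Pt u].
Definition encc (c : Defs.comp) : 'I_B.+1 * 'I_B.+1 * bool :=
  match c with Pt n => (inord n, inord 0, false) | Iv a b => (inord a, inord b, true) end.
Definition enc (E : ent d) : encT := [ffun k => encc (E k)].

Lemma dec_enc (E : ent d) : (forall k, cinf (E k) <= B /\ csup (E k) <= B)%N ->
  dec (enc E) = E.
Proof.
move=> h; apply/ffunP => k; rewrite !ffunE; have := h k.
by case: (E k) => [n|a b] /= [h1 h2]; rewrite !inordK.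
Qed.
End Enc.

Section Card.
Variable d : nat.

Lemma card_pt2 (P : pred 'I_d) (i j : 'I_d) : i != j ->
  (forall k, P k -> k = i \/ k = j) -> #|P| = (P i + P j)%N.
Proof.
move=> hij hP; rewrite (cardD1 i) (cardD1 j) [in X in (_ + (_ + X))%N]eq_card0.
- by rewrite !inE eq_sym hij addn0.
- move=> k; rewrite !inE; apply/negP => /and3P[h1 h2 h3].
  by case: (hP k h3) => e; subst; rewrite eqxx in h1 h2.
Qed.

Lemma cardC' (P : pred 'I_d) : #|P| = (d - #|[predC P]|)%N.
Proof. have h := cardC P; rewrite card_ord in h; apply: (canRL (addnK _)); exact: h. Qed.

Lemma edim_eq (E : ent d) : edim E = (d - #|[pred k | ~~ is_iv (E k)]|)%N.
Proof.
rewrite /edim cardC'; congr (_ - _)%N; apply: eq_card => k; by rewrite !inE.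
Qed.

Lemma edim_two (E : ent d) (i j : 'I_d) : i != j -> (2 <= d)%N ->
  (forall k, k != i -> k != j -> is_iv (E k)) -> edim E = (d - 1)%N ->
  (is_iv (E i) /\ ~~ is_iv (E j)) \/ (~~ is_iv (E i) /\ is_iv (E j)).
Proof.
move=> hij hd hk; rewrite edim_eq (@card_pt2 [pred k | ~~ is_iv (E k)] i j hij); last first.
  move=> k; rewrite inE => hn; case: (eqVneq k i) => [->|hi]; first by left.
  by case: (eqVneq k j) => [->|hj]; [right | move: hn; rewrite hk].
rewrite !inE; case: (is_iv (E i)); case: (is_iv (E j)) => /=; lia.
Qed.

Lemma edim_T (E : ent d) (i j : 'I_d) : i != j ->
  (forall k, k != i -> k != j -> is_iv (E k)) -> ~~ is_iv (E i) -> ~~ is_iv (E j) ->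
  edim E = (d - 2)%N.
Proof.
move=> hij hk hi hj; rewrite edim_eq (@card_pt2 [pred k | ~~ is_iv (E k)] i j hij).
  by rewrite !inE hi hj.
move=> k; rewrite inE => hn; case: (eqVneq k i) => [->|hi']; first by left.
by case: (eqVneq k j) => [->|hj']; [right | move: hn; rewrite hk].
Qed.
End Card.


Section W.
Variable R : realType.
Definition wjf (tj : nat) (v : R) : R := if 0 < v then tj%:R + 2^-1 else tj%:R - 2^-1.
Definition owf (tj : nat) (v : R) : R := if 0 < v then tj%:R - 2^-1 else tj%:R + 2^-1.

Lemma wj_ni tj v : (0 < tj)%N -> notint (wjf tj v).
Proof. by rewrite /wjf; case: ifP => _ h; [apply: notint_halfp | apply: notint_halfm]. Qed.

Lemma wj_cl tj (n : nat) v : (0 < tj < n)%N -> 0 <= wjf tj v <= n%:R.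
Proof.
move=> h; have hh1 := half_pos R; have hh2 := half_lt1 R.
have h1 : (tj.+1%:R <= n%:R :> R) by rewrite ler_nat; lia.
have h2 : (1%:R <= tj%:R :> R) by rewrite ler_nat; lia.
rewrite natS in h1; rewrite /wjf; case: ifP => _; apply/andP; split; lra.
Qed.

Lemma W3 tj v (lo hi : nat) : lo%:R < wjf tj v -> wjf tj v < hi%:R ->
    [/\ (lo <= tj <= hi)%N, (0 < v -> (tj < hi)%N) & (v < 0 -> (lo < tj)%N)].
Proof.
have hh1 := half_pos R; have hh2 := half_lt1 R.
rewrite /wjf; case: ifP => hv h1 h2.
- have a1 : (lo%:R < tj.+1%:R :> R) by rewrite natS; lra.
  have a2 : (tj%:R < hi%:R :> R) by lra.
  rewrite ltr_nat in a1; rewrite ltr_nat in a2; split => //; first lia.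
  by move=> hv'; have := lt_trans hv' hv; rewrite ltxx.
- have a1 : (lo%:R < tj%:R :> R) by lra.
  have a2 : (tj%:R < hi.+1%:R :> R) by rewrite natS; lra.
  rewrite ltr_nat in a1; rewrite ltr_nat in a2; split; [lia | by move=> h; rewrite h in hv | by move=> _].
Qed.

Lemma W4 tj v (lo hi : nat) : (lo < hi)%N -> (tj = lo \/ tj = hi) ->
    ~ (lo%:R < wjf tj v < hi%:R) -> lo%:R < owf tj v < hi%:R.
Proof.
have hh1 := half_pos R; have hh2 := half_lt1 R.
move=> hlh htl hnw; have : (lo.+1%:R <= hi%:R :> R) by rewrite ler_nat.
rewrite natS => hlh'; move: hnw; rewrite /wjf /owf.
case: ifP => hv; case: htl => -> hnw.
- by exfalso; apply: hnw; apply/andP; split; lra.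
- by apply/andP; split; lra.
- by apply/andP; split; lra.
- by exfalso; apply: hnw; apply/andP; split; lra.
Qed.

Lemma W5 tj v (lo hi : nat) (ts bj : R) : 0 <= ts < 1 -> bj = tj%:R -> v != 0 ->
    lo%:R < wjf tj v < hi%:R -> (tj = lo \/ tj = hi) ->
    exists eps, 0 < eps <= 1 - ts /\ lo%:R < bj + eps * v < hi%:R.
Proof.
have hh1 := half_pos R; have hh2 := half_lt1 R.
move=> /andP[t0 t1] -> hv /andP[w1 w2] htl.
pose u := 1 + `|v|.
have hu : 0 < u by rewrite /u; have := normr_ge0 v; lra.
pose eps := (1 - ts) / u.
have he : eps * u = 1 - ts by rewrite /eps divfK // gt_eqF.
have he0 : 0 < eps by apply: divr_gt0 => //; lra.
exists eps.
have hn : 0 <= `|v| by apply: normr_ge0.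
have hev : eps * `|v| = 1 - ts - eps by rewrite -he /u; ring.
move: w1 w2; rewrite /wjf; case: ifP => hvp w1 w2.
- have nv : `|v| = v by apply: gtr0_norm.
  rewrite nv in hev.
  have a2 : (tj%:R < hi%:R :> R) by lra.
  rewrite ltr_nat in a2.
  have a3 : (tj.+1%:R <= hi%:R :> R) by rewrite ler_nat.
  rewrite natS in a3.
  have a1 : tj = lo by case: htl => // e; rewrite e ltnn in a2.
  have hp : 0 < eps * v by apply: mulr_gt0.
  subst lo; split; first (apply/andP; split; lra).
  apply/andP; split; lra.
- have hvn : v < 0 by rewrite lt_neqAle hv /=; rewrite leNgt hvp.
  have nv : `|v| = - v by apply: ltr0_norm.
  rewrite nv in hev.
  have a2 : (lo%:R < tj%:R :> R) by lra.
  rewrite ltr_nat in a2.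
  have a1 : tj = hi by case: htl => // e; rewrite e ltnn in a2.
  clear htl; case: tj a1 a2 w1 w2 => [|tj] a1 a2 w1 w2; first by [].
  have a3 : (lo%:R <= tj%:R :> R) by rewrite ler_nat -ltnS.
  rewrite natS in a1 w1 w2 *; subst hi.
  have hp : 0 < eps * - v by apply: mulr_gt0; rewrite ?oppr_gt0.
  split; first (apply/andP; split; lra).
  rewrite natS; apply/andP; split; lra.
Qed.
End W.

Section More.
Variable R : realType.

Lemma endpoint_pt (c : Defs.comp) (lo hi : nat) (r : R) : (r = lo%:R \/ r = hi%:R) ->
  subclb c (Iv lo hi) -> in_comp c r -> exists n, c = Pt n /\ r = n%:R.
Proof.
case: c => [n|a b] /=; first by move=> _ _ ->; exists n.
move=> hr /andP[h1 h2] /andP[h3 h4]; exfalso.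
have a1 : (lo%:R <= a%:R :> R) by rewrite ler_nat.
have a2 : (b%:R <= hi%:R :> R) by rewrite ler_nat.
case: hr => e; lra.
Qed.

Lemma cl_not_open (lo hi : nat) (r : R) : lo%:R <= r <= hi%:R -> ~ (lo%:R < r < hi%:R) ->
  r = lo%:R \/ r = hi%:R.
Proof.
move=> /andP[h1 h2] hn; case: (eqVneq r lo%:R) => [->|e1]; first by left.
case: (eqVneq r hi%:R) => [->|e2]; first by right.
by exfalso; apply: hn; rewrite !lt_neqAle h1 h2 e2 eq_sym e1.
Qed.

Lemma open_bounds (lo hi n : nat) (r : R) : (lo < hi <= n)%N -> lo%:R < r < hi%:R ->
  0 < r < n%:R.
Proof.
move=> /andP[h1 h2] /andP[h3 h4].
have a1 : (0 <= lo%:R :> R) by rewrite ler0n.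
have a2 : (hi%:R <= n%:R :> R) by rewrite ler_nat.
apply/andP; split; lra.
Qed.

Lemma open_cl_bounds (lo hi n : nat) (r : R) : (lo < hi <= n)%N -> lo%:R < r < hi%:R ->
  0 <= r <= n%:R.
Proof. by move=> h1 /(open_bounds h1) /andP[h2 h3]; rewrite !ltW. Qed.

Lemma notint_ne (r : R) (n : nat) : notint r -> r <> 0 /\ r <> n%:R.
Proof. by move=> h; split; [move=> e; apply: (h 0%N); rewrite e | apply: h]. Qed.

Lemma pt_half (n lo hi : nat) : (lo < hi)%N -> (n = lo -> lo%:R < (n%:R + 2^-1 : R) < hi%:R) /\
  (n = hi -> lo%:R < (n%:R - 2^-1 : R) < hi%:R).
Proof.
have hh1 := half_pos R; have hh2 := half_lt1 R.
move=> h; have : (lo.+1%:R <= hi%:R :> R) by rewrite ler_nat.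
rewrite natS => h'; split => ->; apply/andP; split; lra.
Qed.
End More.

Lemma pigeon4 (a1 a2 a3 a4 : nat) : (a1 <= 2)%N -> (a2 <= 2)%N -> (a3 <= 2)%N -> (a4 <= 2)%N ->
  a1 = a2 \/ a1 = a3 \/ a1 = a4 \/ a2 = a3 \/ a2 = a4 \/ a3 = a4.
Proof. move=> *; lia. Qed.


Section Main.
Variables (R : realType) (d : nat) (N p : 'I_d -> nat) (M : mesh d) (g : 'I_d -> seq nat).
Hypothesis HI : Inv R N p g M.
Hypothesis hd : (2 <= d)%N.
Variables (x y : 'I_d -> R) (i : 'I_d).
Hypotheses (hx : in_clOmega N x) (hy : in_clOmega N y) (hxy : x i = y i)
  (hSx : in_Sk M i x) (hSy : ~ in_Sk M i y).

Let c0 := x i.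

Lemma HB E k : M E -> validc (N k) (E k).
Proof. by case: HI => _ H _ _ _; apply: H. Qed.
Lemma HP1 E E' : M E -> M E' -> (forall k, meetsO (E k) (E' k)) -> E = E'.
Proof. by case: HI => _ _ H _ _; apply: H. Qed.
Lemma HP2 (z : 'I_d -> R) : in_clOmega N z -> exists E, M E /\ mem_ent E z.
Proof. by case: HI => _ _ _ H _; apply: H. Qed.
Lemma HC Q S : M Q -> is_cell Q -> M S -> (forall k, meetsb (S k) (Q k)) ->
  forall k, subclb (S k) (Q k).
Proof. by case: HI => _ _ _ _ [H _]; apply: H. Qed.

Lemma cell_iv (C : ent d) k : is_cell C -> C k = Iv (cinf (C k)) (csup (C k)).
Proof. by move=> /(_ k); case: (C k). Qed.

Lemma valid_bounds E k : M E -> (cinf (E k) <= csup (E k) <= N k)%N.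
Proof. by move/(HB k); case: (E k) => [n|a b] /= => [->|/andP[/ltnW -> ->]]; rewrite ?leqnn. Qed.

Lemma seg_i t : seg x y t i = c0.
Proof. by rewrite /seg -hxy /c0; ring. Qed.

Lemma seg_shift ts t k : seg x y (ts + t) k = seg x y ts k + t * (y k - x k).
Proof. by rewrite /seg; ring. Qed.

Lemma seg_cl t : 0 <= t <= 1 -> in_clOmega N (seg x y t).
Proof.
move=> /andP[t0 t1] k; have /andP[x0 x1] := hx k; have /andP[y0 y1] := hy k.
rewrite /seg; have h1 : 0 <= (1 - t) * x k by apply: mulr_ge0; lra.
have h2 : 0 <= t * y k by apply: mulr_ge0.
have h3 : 0 <= (1 - t) * ((N k)%:R - x k) by apply: mulr_ge0; lra.
have h4 : 0 <= t * ((N k)%:R - y k) by apply: mulr_ge0; lra.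
apply/andP; split; lra.
Qed.

Definition good (Q : ent d) := [/\ M Q, is_cell Q & c0 = (cinf (Q i))%:R \/ c0 = (csup (Q i))%:R].

Lemma Sk_good t : in_Sk M i (seg x y t) <-> exists Q, good Q /\ mem_cl Q (seg x y t).
Proof.
split.
- by case=> Q [h1 h2 h3 h4]; exists Q; split => //; split => //; rewrite -(seg_i t).
- by case=> Q [[h1 h2 h3] h4]; exists Q; split => //; rewrite seg_i.
Qed.

Definition Sset (Q : ent d) : set R := fun t => 0 <= t <= 1 /\ mem_cl Q (seg x y t).

Lemma sup_in Q t0 : Sset Q t0 -> Sset Q (sup (Sset Q)).
Proof.
move=> h0.
have h1 : forall t, Sset Q t -> t <= 1 by move=> t [/andP[_ ->]].
have [l1 l2] := sup_le1 h0 h1.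
have hS0 : 0 <= t0 by case: h0 => /andP[].
split; first by apply/andP; split => //; apply: le_trans l1.
move=> k; rewrite /seg.
have lo : forall lo, (forall t, Sset Q t -> lo <= (1 - t) * x k + t * y k) ->
   lo <= (1 - sup (Sset Q)) * x k + sup (Sset Q) * y k.
  by move=> lo H; apply: (lin_sup h0 h1 H).
have hi : forall hi, (forall t, Sset Q t -> (1 - t) * x k + t * y k <= hi) ->
   (1 - sup (Sset Q)) * x k + sup (Sset Q) * y k <= hi.
  by move=> hi H; apply: (lin_sup' h0 h1 H).
case eQ: (Q k) => [n|a b] /=.
- apply/le_anti/andP; split.
  + by apply: hi => t [_ /(_ k)]; rewrite eQ /seg /= => ->.
  + by apply: lo => t [_ /(_ k)]; rewrite eQ /seg /= => ->.
- apply/andP; split.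
  + by apply: lo => t [_ /(_ k)]; rewrite eQ /seg /= => /andP[].
  + by apply: hi => t [_ /(_ k)]; rewrite eQ /seg /= => /andP[].
Qed.

Let B := (\max_(k < d) N k)%N.

Lemma enc_ok E : M E -> dec (enc B E) = E.
Proof.
move=> HE; apply: dec_enc => k; have := valid_bounds k HE; have := @leq_bigmax _ N k.
rewrite -/B; lia.
Qed.

Lemma step1 : exists ts, [/\ 0 <= ts < 1, (exists Q, good Q /\ mem_cl Q (seg x y ts)) &
  forall t, ts < t -> t <= 1 -> ~ exists Q, good Q /\ mem_cl Q (seg x y t)].
Proof.
pose P (e : encT d B) := good (dec e) /\ exists t, Sset (dec e) t.
pose f (e : encT d B) := sup (Sset (dec e)).
have [Q0 [hQ0 hcQ0 hxQ0 hxi]] := hSx.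
have e0 : seg x y 0 = x by apply: functional_extensionality => k; rewrite /seg; ring.
have [em [_ [hgood [t1 ht1]] hmax]] : exists em, [/\ em \in enum (encT d B), P em &
    forall e, e \in enum (encT d B) -> P e -> f e <= f em].
  apply: seq_max; exists (enc B Q0); rewrite mem_enum; split => //.
  rewrite /P enc_ok //; split; first by split => //; rewrite /c0.
  by exists 0; split; [rewrite lexx ler01 | rewrite e0].
have hin := sup_in ht1; set ts := sup _ in hin.
have hts : forall t, ts < t -> t <= 1 -> ~ exists Q, good Q /\ mem_cl Q (seg x y t).
  move=> t h1 h2 [Q [hQ hm]].
  have hQe : dec (enc B Q) = Q by apply: enc_ok; case: hQ.
  have hSt : Sset Q t by split => //; apply/andP; split => //; apply: le_trans (ltW h1); case: hin => /andP[].
  have := hmax (enc B Q); rewrite mem_enum => /(_ erefl).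
  rewrite /P /f hQe => /(_ (conj hQ (ex_intro _ t hSt))) => hle.
  have [l1 _] := sup_le1 hSt (fun t' (h : Sset Q t') => let: conj h' _ := h in proj2 (andP h')).
  have : t <= ts by apply: le_trans l1 hle.
  by rewrite leNgt h1.
case: hin => /andP[h0 h1] hm.
exists ts; split => //.
- rewrite h0 /= lt_neqAle h1 andbT; apply/eqP => e1; apply: hSy.
  have -> : y = seg x y 1 by apply: functional_extensionality => k; rewrite /seg; ring.
  by apply/Sk_good; exists (dec em); rewrite -e1.
- by exists (dec em).
Qed.


Variable ts : R.
Hypotheses (hts0 : 0 <= ts) (hts1 : ts < 1)
  (htsmax : forall t, ts < t -> t <= 1 -> ~ exists Q, good Q /\ mem_cl Q (seg x y t)).

Definition bb := seg x y ts.
Definition vv k := y k - x k.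

Definition exitb (Q : ent d) (k : 'I_d) : bool :=
  ((0 < vv k) && (bb k == (csup (Q k))%:R)) || ((vv k < 0) && (bb k == (cinf (Q k))%:R)).
Definition ES (Q : ent d) : {set 'I_d} := finset (exitb Q).

Lemma bb_cl : in_clOmega N bb.
Proof. by apply: seg_cl; rewrite hts0 ltW. Qed.

Lemma vi0 : vv i = 0.
Proof. by rewrite /vv hxy subrr. Qed.

Lemma bb_i : bb i = c0.
Proof. exact: seg_i. Qed.

Lemma noexit Q : good Q -> mem_cl Q bb -> exists j, exitb Q j.
Proof.
move=> [HQ cQ hQi] hb; apply: NNPP => hn.
have hne : forall k, ~~ exitb Q k by move=> k; apply/negP => h; apply: hn; exists k.
pose f k := if 0 < vv k then ((csup (Q k))%:R - bb k) / vv k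
            else if vv k < 0 then (bb k - (cinf (Q k))%:R) / (- vv k) else 1.
have hf : forall k, 0 < f k.
  move=> k; rewrite /f; have := hb k; rewrite (cell_iv k cQ) /= => /andP[l1 l2].
  have := hne k; rewrite /exitb.
  case: (ltgtP (vv k) 0) => hv /=.
  - move=> /eqP hne'; apply: divr_gt0; last by rewrite oppr_gt0.
    by rewrite subr_gt0 lt_neqAle l1 andbT eq_sym; apply/eqP.
  - rewrite orbF => hne'; apply: divr_gt0 => //.
    by rewrite subr_gt0 lt_neqAle l2 andbT.
  - by move=> _; rewrite ltr01.
have [e [he hef]] := pos_min hf.
pose eps := Num.min e (1 - ts).
have heps : 0 < eps by rewrite lt_min he subr_gt0 hts1.
have heps1 : eps <= 1 - ts by rewrite ge_min lexx orbT.
have hepsf : forall k, eps <= f k by move=> k; apply: le_trans (hef k); rewrite ge_min lexx.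
apply: (htsmax (t := ts + eps)); [lra | lra |].
exists Q; split; first by split.
move=> k; rewrite seg_shift -/bb -/(vv k) (cell_iv k cQ) /=.
have := hb k; rewrite (cell_iv k cQ) /= => /andP[l1 l2].
have := hepsf k; rewrite /f.
case: (ltgtP (vv k) 0) => hv /=.
- rewrite ler_pdivlMr ?oppr_gt0 // => h; apply/andP; split; first lra.
  have : 0 <= eps * - vv k by apply: mulr_ge0; lra.
  lra.
- rewrite ler_pdivlMr // => h; apply/andP; split; last lra.
  have : 0 <= eps * vv k by apply: mulr_ge0; lra.
  lra.
- by rewrite hv mulr0 addr0 l1 l2.
Qed.

Definition Concl := exists (T Q : ent d) (j : 'I_d),
      [/\ tjunction R N M T, is_ascell R M T i j Q,
          (exists t : R, 0 <= t <= 1 /\ mem_cl T (seg x y t)),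
          x j != y j &
          (exists t : R, 0 <= t <= 1 /\ in_comp (Q j) ((1 - t) * x j + t * y j))].


Lemma cell_lt (C : ent d) k : M C -> is_cell C -> (cinf (C k) < csup (C k))%N.
Proof. by move=> HC cC; have := HB k HC; rewrite (cell_iv k cC) /= => /andP[]. Qed.

Lemma in_iv (lo hi : nat) (r : R) : in_comp (Iv lo hi) r = (lo%:R < r < hi%:R).
Proof. by []. Qed.

Lemma step2 Q : good Q -> mem_cl Q bb ->
  Concl \/ exists Q', [/\ good Q', mem_cl Q' bb & (#|ES Q'| < #|ES Q|)%N].
Proof.
move=> hgQ hbQ; have [HQ cQ hQi] := hgQ.
have [j hj] := noexit hgQ hbQ.
have hvi := vi0.
have hh1 := half_pos R; have hh2 := half_lt1 R.
have hji : j != i.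
  by apply/eqP => e; move: hj; rewrite /exitb e hvi ltxx.
have hij : i != j by rewrite eq_sym.
have [tj [hbj hsg]] : exists tj : nat, bb j = tj%:R /\
   ((0 < vv j /\ tj = csup (Q j)) \/ (vv j < 0 /\ tj = cinf (Q j))).
  move: hj; rewrite /exitb => /orP[/andP[h1 /eqP h2]|/andP[h1 /eqP h2]].
  - by exists (csup (Q j)); split => //; left.
  - by exists (cinf (Q j)); split => //; right.
have hyb : y j - bb j = (1 - ts) * vv j by rewrite /bb /seg /vv; ring.
have hvj : vv j != 0.
  by apply/eqP => e; rewrite e in hsg; case: hsg => [[h _]|[h _]]; rewrite ltxx in h.
have htj : (0 < tj < N j)%N.
  have hltQ := cell_lt j HQ cQ; have hvQ := valid_bounds j HQ.
  have /andP[y0 y1] := hy j.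
  case: hsg => [[hv e]|[hv e]].
  + have : 0 < (1 - ts) * vv j by apply: mulr_gt0; [rewrite subr_gt0 | ].
    move=> hp; have : (tj%:R < (N j)%:R :> R) by lra.
    rewrite ltr_nat => h; apply/andP; split => //; rewrite e; exact: leq_ltn_trans (leq0n _) hltQ.
  + have : 0 < (1 - ts) * - vv j by apply: mulr_gt0; [rewrite subr_gt0 | rewrite oppr_gt0].
    move=> hp; have : (0%:R < tj%:R :> R) by lra.
    rewrite ltr_nat => h; apply/andP; split => //; rewrite e.
    by move/andP: hvQ => [_ hv2]; exact: leq_trans hltQ hv2.
have hTjend : bb j = (cinf (Q j))%:R \/ bb j = (csup (Q j))%:R.
  by rewrite hbj; case: hsg => [[_ ->]|[_ ->]]; [right|left].
set wj := wjf tj (vv j); set ow := owf tj (vv j).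
have hwj_ni : notint wj by apply: wj_ni; case/andP: htj.
have hwj_cl : 0 <= wj <= (N j)%:R by apply: wj_cl.
have hrho : forall k, exists r : R, [/\ (cinf (Q k))%:R < r < (csup (Q k))%:R, notint r &
    forall lo' hi' : nat, lo'%:R < r -> r < hi'%:R ->
      [/\ lo'%:R <= bb k <= hi'%:R, (0 < vv k -> bb k < (csup (Q k))%:R -> bb k < hi'%:R) &
          (vv k < 0 -> (cinf (Q k))%:R < bb k -> lo'%:R < bb k)]].
  move=> k; apply: choose_r; first exact: cell_lt.
  by have := hbQ k; rewrite (cell_iv k cQ).
have [rho hrho'] := fin_all_exists hrho.
pose w := fun k => if k == j then wj else rho k.
pose b' := fun k => if k == i then c0 else if k == j then bb j else rho k.
have hrho_cl : forall k, 0 <= rho k <= (N k)%:R.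
  move=> k; have [h _ _] := hrho' k; apply: (open_cl_bounds _ h).
  by rewrite cell_lt //; have := valid_bounds k HQ => /andP[].
have hw_cl : in_clOmega N w.
  by move=> k; rewrite /w; case: eqP => [->|_]; [exact: hwj_cl | exact: hrho_cl].
have [Q2 [HQ2 hwQ2]] := HP2 hw_cl.
have cQ2 : is_cell Q2.
  move=> k; apply: (notint_iv _ (hwQ2 k)); rewrite /w; case: eqP => _ //.
  by case: (hrho' k).
have hwQ2j : in_comp (Q2 j) wj by have := hwQ2 j; rewrite /w eqxx.
have hwQ2k : forall k, k != j -> in_comp (Q2 k) (rho k).
  by move=> k hk; have := hwQ2 k; rewrite /w (negbTE hk).
have hbQ2 : mem_cl Q2 bb.
  move=> k; rewrite (cell_iv k cQ2) /=; case: (eqVneq k j) => [->|hk].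
  + have h := hwQ2j; rewrite (cell_iv j cQ2) in_iv in h; move/andP: h => [h1 h2].
    have [W _ _] := W3 h1 h2; by rewrite hbj !ler_nat.
  + have h := hwQ2k k hk; rewrite (cell_iv k cQ2) in_iv in h; move/andP: h => [h1 h2].
    have [_ _ H] := hrho' k; have [A _ _] := H _ _ h1 h2; exact: A.
case: (classic (c0 = (cinf (Q2 i))%:R \/ c0 = (csup (Q2 i))%:R)) => hcase.
-
  right; exists Q2; split => //.
  have hsub : ES Q2 \subset ES Q :\ j.
    apply/fintype.subsetP => k; rewrite !inE => hk.
    have hkj : k != j.
      apply/eqP => ekj; subst k.
      have h := hwQ2j; rewrite (cell_iv j cQ2) in_iv in h; move/andP: h => [h1 h2].
      have [_ W2 W3'] := W3 h1 h2.
      move: hk; rewrite /exitb hbj => /orP[/andP[hv /eqP e]|/andP[hv /eqP e]];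
        move/nateq: e => e.
      * by have := W2 hv; rewrite e ltnn.
      * by have := W3' hv; rewrite e ltnn.
    rewrite hkj /=; apply: contraT => hnk.
    have h := hwQ2k k hkj; rewrite (cell_iv k cQ2) in_iv in h; move/andP: h => [h1 h2].
    have [_ _ H] := hrho' k; have [_ H3 H4] := H _ _ h1 h2.
    have /andP[l1 l2] : (cinf (Q k))%:R <= bb k <= (csup (Q k))%:R.
      by have h := hbQ k; rewrite (cell_iv k cQ) in h.
    move: hk hnk; rewrite /exitb => /orP[/andP[hv /eqP e]|/andP[hv /eqP e]].
    + move=> hn.
      have hne : bb k != (csup (Q k))%:R by apply: contraNneq hn => e'; rewrite hv e' eqxx.
      have hlt : bb k < (csup (Q k))%:R by rewrite lt_neqAle hne l2.
      by have := H3 hv hlt; rewrite e ltxx.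
    + move=> hn.
      have hne : bb k != (cinf (Q k))%:R by apply: contraNneq hn => e'; rewrite hv e' eqxx orbT.
      have hlt : (cinf (Q k))%:R < bb k by rewrite lt_neqAle eq_sym hne l1.
      by have := H4 hv hlt; rewrite e ltxx.
  rewrite (cardsD1 j (ES Q)) inE hj add1n ltnS; exact: subset_leq_card hsub.
- left.
  have hc0 : (cinf (Q2 i))%:R < c0 < (csup (Q2 i))%:R.
    have h := hbQ2 i; rewrite (cell_iv i cQ2) /= bb_i in h.
    case: (classic ((cinf (Q2 i))%:R < c0 < (csup (Q2 i))%:R)) => // hn.
    by exfalso; apply: hcase; exact: cl_not_open h hn.
  have hb'_cl : in_clOmega N b'.
    move=> k; rewrite /b'; case: eqP => [->|_]; first exact: hx i.
    case: eqP => [->|_]; [exact: bb_cl j | exact: hrho_cl].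
  have [T [HT hb'T]] := HP2 hb'_cl.
  have hb'Tk : forall k, k != i -> k != j -> in_comp (T k) (rho k).
    by move=> k hki hkj; have := hb'T k; rewrite /b' (negbTE hki) (negbTE hkj).
  have hb'Ti : in_comp (T i) c0 by have := hb'T i; rewrite /b' eqxx.
  have hb'Tj : in_comp (T j) (bb j) by have := hb'T j; rewrite /b' (negbTE hji) eqxx.
  have hb'Q : mem_cl Q b'.
    move=> k; rewrite /b'; case: eqP => [->|/eqP hki]; first by rewrite -bb_i; apply: hbQ.
    case: eqP => [->|/eqP hkj]; first exact: hbQ.
    rewrite (cell_iv k cQ); apply: comp_cl; by case: (hrho' k).
  have hTQ := HC HQ cQ HT (fun k => meetsb_real (hb'T k) (hb'Q k)).
  have [ti [eTi hti]] : exists ti, T i = Pt ti /\ c0 = ti%:R.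
    apply: (endpoint_pt hQi) => //; by rewrite -(cell_iv i cQ); apply: hTQ.
  have [tj' [eTj htj']] : exists n, T j = Pt n /\ bb j = n%:R.
    apply: (endpoint_pt hTjend) => //; by rewrite -(cell_iv j cQ); apply: hTQ.
  have etj : tj' = tj by apply: (@nateq R); rewrite -htj' hbj.
  subst tj'.
  have hTk_iv : forall k, k != i -> k != j -> is_iv (T k).
    move=> k hki hkj; apply: (notint_iv _ (hb'Tk k hki hkj)); by case: (hrho' k).
  have hedT : edim T = (d - 2)%N by apply: (edim_T hij) => //; rewrite ?eTi ?eTj.
  have hb'inQ2 : (cinf (Q2 j))%:R < bb j < (csup (Q2 j))%:R -> mem_ent Q2 b'.
    move=> hop k; rewrite /b'; case: eqP => [->|/eqP hki]; first by rewrite (cell_iv i cQ2).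
    case: eqP => [->|/eqP hkj]; first by rewrite (cell_iv j cQ2).
    exact: hwQ2k.
  have hTneQ2 : T <> Q2.
    by move=> e; have := cQ2 i; rewrite -e eTi.
  have hendQ2 : tj = cinf (Q2 j) \/ tj = csup (Q2 j).
    have h := hbQ2 j; rewrite (cell_iv j cQ2) /= in h.
    have : bb j = (cinf (Q2 j))%:R \/ bb j = (csup (Q2 j))%:R.
      have HH := @cl_not_open R _ _ _ h. apply: HH => hop; apply: hTneQ2; apply: HP1 => // k.
      exact: meetsO_real (hb'T k) (hb'inQ2 hop k).
    by rewrite hbj => -[/nateq e|/nateq e]; [left|right].
  have hb'Q2 : mem_cl Q2 b'.
    move=> k; rewrite /b'; case: eqP => [->|/eqP hki].
      by apply: comp_cl; rewrite (cell_iv i cQ2).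
    case: eqP => [->|/eqP hkj]; first exact: hbQ2.
    by apply: comp_cl; exact: hwQ2k.
  have hTQ2 := HC HQ2 cQ2 HT (fun k => meetsb_real (hb'T k) (hb'Q2 k)).
  pose kind (F : ent d) : nat := if is_iv (F i) then (if cinf (F i) == ti then 1%N else 2%N) else 0%N.
  pose z0 := fun k => if k == j then ow else b' k.
  pose z1 := fun k => if k == i then c0 + 2^-1 else b' k.
  pose z2 := fun k => if k == i then c0 - 2^-1 else b' k.
  pose zk (n : nat) := if n == 0%N then z0 else if n == 1%N then z1 else z2.
  have hkind : forall F, supports R M T F -> (kind F <= 2)%N /\ mem_ent F (zk (kind F)).
    move=> F [HF hedF hbdF].
    have [hclF hnF] := hbdF b' hb'T.
    have hFk : forall k, k != i -> k != j -> in_comp (F k) (rho k).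
      move=> k hki hkj; have := hclF k; rewrite /b' (negbTE hki) (negbTE hkj).
      apply: notint_cl_comp; by case: (hrho' k).
    have hFiv : forall k, k != i -> k != j -> is_iv (F k).
      move=> k hki hkj; apply: (notint_iv _ (hFk k hki hkj)); by case: (hrho' k).
    have hclFi : in_compcl (F i) c0 by have := hclF i; rewrite /b' eqxx.
    have hclFj : in_compcl (F j) (bb j) by have := hclF j; rewrite /b' (negbTE hji) eqxx.
    have memF : forall z : 'I_d -> R, (forall k, k != i -> k != j -> z k = rho k) ->
        in_comp (F i) (z i) -> in_comp (F j) (z j) -> mem_ent F z.
      move=> z hz zi zj k; case: (eqVneq k i) => [->//|hki]; case: (eqVneq k j) => [->//|hkj].
      by rewrite hz //; apply: hFk.
    have hzb : forall k, k != i -> k != j -> b' k = rho k.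
      by move=> k hki hkj; rewrite /b' (negbTE hki) (negbTE hkj).
    have hvFi := HB i HF; have hvFj := HB j HF.
    case: (edim_two hij hd hFiv hedF) => [[ivi nivj]|[nivi ivj]].
    + move: ivi nivj hclFi hclFj memF hnF hvFi; rewrite /kind.
      case eFi: (F i) => [n|lo hi] //= _; case eFj: (F j) => [n'|lo' hi'] //= _ hci hcj memF hnF.
      move=> /andP[hlohi _].
      have hend : c0 = lo%:R \/ c0 = hi%:R.
        apply: cl_not_open => // hop; apply: hnF; apply: memF => //.
        * by rewrite /b' eqxx ?eFi.
        * by rewrite /b' (negbTE hji) eqxx ?eFj.
      have [ph1 ph2] := @pt_half R ti lo hi hlohi.
      case: (eqVneq lo ti) => [elo|nlo] /=.
      * split => //; apply: memF.
        -- by move=> k hki hkj; rewrite /zk /z1 /= (negbTE hki) hzb.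
        -- by rewrite /zk /z1 /= eqxx ?eFi hti; apply: ph1.
        -- by rewrite /zk /z1 /= (negbTE hji) /b' (negbTE hji) eqxx ?eFj.
      * have ehi : ti = hi.
          case: hend; rewrite hti => /nateq e //.
          by rewrite e eqxx in nlo.
        split => //; apply: memF.
        -- by move=> k hki hkj; rewrite /zk /z2 /= (negbTE hki) hzb.
        -- by rewrite /zk /z2 /= eqxx ?eFi hti; apply: ph2.
        -- by rewrite /zk /z2 /= (negbTE hji) /b' (negbTE hji) eqxx ?eFj.
    + move: nivi ivj hclFi hclFj memF hnF hvFj; rewrite /kind.
      case eFi: (F i) => [n|lo hi] //= _; case eFj: (F j) => [n'|lo' hi'] //= _ hci hcj memF hnF.
      move=> /andP[hlohi _].
      have hend : bb j = lo'%:R \/ bb j = hi'%:R.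
        apply: cl_not_open => // hop; apply: hnF; apply: memF => //.
        * by rewrite /b' eqxx ?eFi.
        * by rewrite /b' (negbTE hji) eqxx ?eFj.
      have htl : tj = lo' \/ tj = hi' by rewrite hbj in hend; case: hend => /nateq e; [left|right].
      have hnw : ~ (lo'%:R < wj < hi'%:R).
        move=> hop.
        pose w' := fun k => if k == j then wj else b' k.
        have m1 : mem_ent F w'.
          apply: memF.
          -- by move=> k hki hkj; rewrite /w' (negbTE hkj) hzb.
          -- by rewrite /w' (negbTE hij) /b' eqxx ?eFi.
          -- by rewrite /w' eqxx ?eFj.
        have m2 : mem_ent Q2 w'.
          move=> k; rewrite /w'; case: eqP => [->//|/eqP hkj].
          rewrite /b'; case: eqP => [->|/eqP hki]; first by rewrite (cell_iv i cQ2).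
          by rewrite (negbTE hkj); exact: hwQ2k.
        have eFQ : F = Q2 by apply: HP1 => // k; exact: meetsO_real (m1 k) (m2 k).
        by have := cQ2 i; rewrite -eFQ eFi.
      have how := W4 hlohi htl hnw.
      split => //; apply: memF.
      -- by move=> k hki hkj; rewrite /zk /z0 /= (negbTE hkj) hzb.
      -- by rewrite /zk /z0 /= (negbTE hij) /b' eqxx ?eFi.
      -- by rewrite /zk /z0 /= eqxx ?eFj.
  have huniq : forall F1 F2, supports R M T F1 -> supports R M T F2 -> kind F1 = kind F2 -> F1 = F2.
    move=> F1 F2 s1 s2 ek; have [_ m1] := hkind F1 s1; have [_ m2] := hkind F2 s2.
    rewrite ek in m1; apply: HP1; [by case: s1 | by case: s2 |] => k.
    exact: meetsO_real (m1 k) (m2 k).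
  have htjn : tjunction R N M T.
    split => //.
    - move=> hall; have [_ [k hk]] := hall b' hb'T; move: hk; rewrite /b'.
      case: eqP => [->|/eqP hki].
        have := open_bounds (n := N i) _ hc0.
        rewrite cell_lt //; have := valid_bounds i HQ2 => /andP[_ ->] => /(_ erefl) /andP[u1 u2].
        by case=> e; rewrite e ltxx in u1 u2.
      case: eqP => [->|/eqP hkj]; last first.
        by have [_ hn _] := hrho' k; have [h1 h2] := notint_ne (N k) hn; case.
      rewrite hbj => -[/(@nateq R tj 0%N) e|/nateq e]; move: htj; rewrite e.
      + by rewrite ltnn.
      + by rewrite ltnn andbF.
    - move=> [F1 [F2 [F3 [F4 [[n12 n13 n14] [[n23 n24 n34] [s1 s2 s3 s4]]]]]]].
      have [k1 _] := hkind F1 s1; have [k2 _] := hkind F2 s2.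
      have [k3 _] := hkind F3 s3; have [k4 _] := hkind F4 s4.
      case: (pigeon4 k1 k2 k3 k4) => [e|[e|[e|[e|[e|e]]]]].
      + exact: n12 (huniq _ _ s1 s2 e).
      + exact: n13 (huniq _ _ s1 s3 e).
      + exact: n14 (huniq _ _ s1 s4 e).
      + exact: n23 (huniq _ _ s2 s3 e).
      + exact: n24 (huniq _ _ s2 s4 e).
      + exact: n34 (huniq _ _ s3 s4 e).
  exists T, Q2, j; split.
  + exact: htjn.
  + split => //; exists ti, tj; split; first by split.
    split.
    * move=> z hz; split; first by move=> k; apply: subclb_real (hTQ2 k) (hz k).
      move=> hzQ; have := hzQ j; have := hz j; rewrite eTj /= => ->.
      rewrite (cell_iv j cQ2) /=; case: hendQ2 => <-; by rewrite ltxx ?andbF.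
    * by rewrite (cell_iv i cQ2) /= -hti.
    * exact: hendQ2.
  + exists ts; split; first by rewrite hts0 ltW.
    move=> k; case: (eqVneq k i) => [->|hki]; first by rewrite eTi /= -/bb bb_i hti.
    case: (eqVneq k j) => [->|hkj]; first by rewrite eTj /= -/bb hbj.
    have := hb'Tk k hki hkj; have [_ hn H] := hrho' k.
    case: (T k) => [n|lo hi] /= h; first by case: (hn n).
    by move/andP: h => [h1 h2]; have [A _ _] := H _ _ h1 h2.
  + by apply/eqP => e; move: hvj; rewrite /vv e subrr eqxx.
  + have h := hwQ2j; rewrite (cell_iv j cQ2) in_iv in h.
    have hts : 0 <= ts < 1 by rewrite hts0 hts1.
    have [eps [/andP[e1 e2] he]] := W5 hts hbj hvj h hendQ2.
    exists (ts + eps); split.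
    * apply/andP; split; [apply: addr_ge0 => //; exact: ltW | by rewrite -lerBrDl].
    * rewrite (cell_iv j cQ2) /=.
      have -> : (1 - (ts + eps)) * x j + (ts + eps) * y j = bb j + eps * vv j.
        by rewrite /bb /seg /vv; ring.
      exact: he.
Qed.


Lemma conclude Q : good Q -> mem_cl Q bb -> Concl.
Proof.
move=> hg hb; move: (leqnn #|ES Q|); move: {2}#|ES Q| => n.
elim: n Q hg hb => [|n IH] Q hg hb hn.
- case: (step2 hg hb) => [//|[Q' [_ _ hlt]]].
  by move: hn; rewrite leqn0 => /eqP e; rewrite e in hlt.
- case: (step2 hg hb) => [//|[Q' [hg' hb' hlt]]].
  apply: (IH Q' hg' hb'); rewrite -ltnS; exact: leq_trans hlt hn.
Qed.

End Main.

Theorem lemma2p3 (R : realType) (d : nat) (N p : 'I_d -> nat) (M : mesh d) :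
  (2 <= d)%N -> (forall k, (1 <= N k)%N) -> admissible R N p M ->
  forall (x y : 'I_d -> R) (i : 'I_d),
    in_clOmega N x -> in_clOmega N y -> x i = y i ->
    in_Sk M i x -> ~ in_Sk M i y ->
    exists (T Q : ent d) (j : 'I_d),
      [/\ tjunction R N M T, is_ascell R M T i j Q,
          (exists t : R, 0 <= t <= 1 /\ mem_cl T (seg x y t)),
          x j != y j &
          (exists t : R, 0 <= t <= 1 /\ in_comp (Q j) ((1 - t) * x j + t * y j))].
Proof.
move=> hd hN Hadm x y i hx hy hxy hSx hSy.
have [g HI] := Inv_adm Hadm.
have [ts [/andP[h0 h1] [Q [hg hm]] hmax]] := step1 HI hd hxy hSx hSy.
exact: (conclude HI hd hx hy hxy h0 h1 hmax hg hm).
Qed.
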